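(* Let $X$ be a finite graph. If $X$ has a maximal (with respect to inclusion) $\epsilon$-Følner set $F$ that is $\alpha$-small for some $\alpha<\frac{1}{2}$, then there exists $\delta=\delta(\epsilon,\alpha)$ such that $X$ can be decomposed as $X=F\sqcup Y_1\sqcup\cdots \sqcup Y_k$ where the graphs $Y_i$ are $\delta$-expanders and are $(\frac{1}{2}-\alpha)$-big in $X$.
   Context: Graphs are finite with no multiple edges nor loops. For $A\subseteq X$, $\partial A$ is the set of edges joining $A$ to $X\smallsetminus A$. A non-empty $A\subset X$ is an $\epsilon$-Følner set if $|A|\leq\frac12|X|$ and $|\partial A|\leq\epsilon|A|$. $X$ is an $\epsilon$-expander if it has no $\epsilon$-Følner sets. A decomposition means the pieces are induced subgraphs on a partition of the vertex set. $A$ is $\alpha$-big in $X$ if $|A|\geq\alpha|X|$, $\alpha$-small if $|A|<\alpha|X|$. *)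

(* Defs.v *)
From HB Require Import structures.
From mathcomp Require Import all_boot all_order all_algebra.
From mathcomp Require Import reals.
Set Implicit Arguments. Unset Strict Implicit. Unset Printing Implicit Defensive.
Import Order.TTheory GRing.Theory Num.Theory.
Local Open Scope ring_scope.

Section Graphs.
Variable T : finType.
Variable e : rel T.

Definition simple_graph : Prop := symmetric e /\ irreflexive e.

(* Edge boundary of A inside the induced subgraph on V: edges joining A to
   V \ A.  Each undirected edge {x,y} with x in A, y in V\A is counted once
   as the ordered pair (x,y). *)
Definition boundary (V A : {set T}) : {set T * T} :=
  [set p : T * T | [&& p.1 \in A, p.2 \in V :\: A & e p.1 p.2]].

Definition folner {R : realType} (V : {set T}) (eps : R) (A : {set T}) : Prop :=
  [/\ A != set0, A \subset V, (2 * #|A| <= #|V|)%N &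
      (#|boundary V A|%:R <= eps * #|A|%:R)].

Definition expander {R : realType} (V : {set T}) (eps : R) : Prop :=
  forall A : {set T}, ~ folner V eps A.

Definition maximal_folner {R : realType} (eps : R) (F : {set T}) : Prop :=
  folner [set: T] eps F /\
  forall B : {set T}, F \proper B -> ~ folner [set: T] eps B.

Definition small {R : realType} (alpha : R) (A : {set T}) : Prop :=
  #|A|%:R < alpha * #|T|%:R.
Definition big {R : realType} (alpha : R) (A : {set T}) : Prop :=
  alpha * #|T|%:R <= #|A|%:R.

End Graphs.

(* Main.v *)
Require Import Defs.
From HB Require Import structures.
From mathcomp Require Import all_boot all_order all_algebra.
From mathcomp Require Import reals.
From mathcomp Require Import zify ring lra.
Set Implicit Arguments. Unset Strict Implicit. Unset Printing Implicit Defensive.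
Import Order.TTheory GRing.Theory Num.Theory.

Section Comb.
Variable T : finType.
Variable e : rel T.
Hypothesis esym : symmetric e.
Implicit Types U V W A B : {set T}.

Definition E (U V : {set T}) : nat := \sum_(x in U) \sum_(y in V) (e x y : nat).

Lemma sum_setU (A B : {set T}) (F : T -> nat) : [disjoint A & B] ->
  \sum_(x in A :|: B) F x = \sum_(x in A) F x + \sum_(x in B) F x.
Proof. by move=> dAB; rewrite -bigU //; apply: eq_bigl => x; rewrite !inE. Qed.

Lemma E_sym U V : E U V = E V U.
Proof.
rewrite /E exchange_big; apply: eq_bigr => x _; apply: eq_bigr => y _.
by rewrite esym.
Qed.

Lemma E_Ul (U1 U2 : {set T}) V : [disjoint U1 & U2] -> E (U1 :|: U2) V = E U1 V + E U2 V.
Proof. by move=> d; rewrite /E sum_setU. Qed.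

Lemma E_Ur U (V1 V2 : {set T}) : [disjoint V1 & V2] -> E U (V1 :|: V2) = E U V1 + E U V2.
Proof. by move=> d; rewrite E_sym E_Ul // !(E_sym U). Qed.

Lemma E_monor U V W : V \subset W -> E U V <= E U W.
Proof.
move=> sVW; rewrite -(setID W V) (setIidPr sVW) E_Ur ?leq_addr //.
by rewrite -setI_eq0; apply/eqP/setP => x; rewrite !inE; case: (x \in V); rewrite ?andbF.
Qed.

Lemma E_monol U V W : U \subset W -> E U V <= E W V.
Proof. by move=> s; rewrite !(E_sym _ V) E_monor. Qed.

Lemma E_sq U V : [disjoint U & V] ->
  E (U :|: V) (U :|: V) = E U U + E V V + 2 * E U V.
Proof.
move=> d; rewrite E_Ul // !E_Ur // (E_sym V U); lia.
Qed.

Lemma card_boundary V A : #|boundary e V A| = E A (V :\: A).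
Proof.
rewrite -sum1_card big_mkcond /=.
rewrite /E.
transitivity (\sum_x \sum_y (if x \in A then if y \in V :\: A then (e x y : nat) else 0 else 0)); last first.
  rewrite [RHS]big_mkcond /=; apply: eq_bigr => x _; case: ifP => _; first by rewrite [RHS]big_mkcond.
  by rewrite big1.
rewrite pair_bigA /=; apply: eq_bigr => [[x y]] _ /=.
rewrite inE /=; case: (x \in A); case: (y \in V :\: A); case: (e x y) => //.
Qed.


Lemma E_set0r U : E U set0 = 0.
Proof. by rewrite /E big1 // => x _; rewrite big_set0. Qed.

Lemma E_set0l U : E set0 U = 0.
Proof. by rewrite /E big_set0. Qed.

End Comb.

Section Fib.
Variables (T : finType) (Y : {set T}) (n : nat).
Implicit Types (g : {ffun T -> 'I_n}) (S : {set T}).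

Definition fib g i := [set x in Y | g x == i].
Definition relabel g S l : {ffun T -> 'I_n} :=
  [ffun x => if x \in S then l else g x].

Lemma fib_sub g i : fib g i \subset Y.
Proof. by apply/subsetP => x; rewrite inE => /andP[]. Qed.

Lemma fib_disj g i j : i != j -> [disjoint fib g i & fib g j].
Proof.
move=> ij; rewrite -setI_eq0; apply/eqP/setP => x; rewrite !inE.
apply/negP => /andP[/andP[_ /eqP h1] /andP[_ /eqP h2]].
by rewrite -h1 -h2 eqxx in ij.
Qed.

Lemma fib_relabel g S l i j : S \subset fib g j ->
  fib (relabel g S l) i = if i == l then fib g l :|: S else fib g i :\: S.
Proof.
move=> sS; apply/setP => x.
have SY : x \in S -> x \in Y by move=> /(subsetP sS); rewrite inE => /andP[].
case: (i =P l) => [->|/eqP il]; rewrite !inE ffunE; case Sx: (x \in S) => /=.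
- by rewrite SY // eqxx orbT.
- by rewrite orbF.
- by rewrite eq_sym (negbTE il) andbF.
- by [].
Qed.

Lemma fib_relabel_other g S l i j : S \subset fib g j -> i != j -> i != l ->
  fib (relabel g S l) i = fib g i.
Proof.
move=> sS ij il; rewrite (fib_relabel _ _ sS) (negbTE il).
apply/setP => x; rewrite !inE; case Sx: (x \in S) => //=.
have := subsetP sS x Sx; rewrite inE => /andP[-> /eqP ->].
by rewrite eq_sym (negbTE ij).
Qed.

Variable R : realType.
Local Open Scope ring_scope.
Variable w : {set T} -> R.

Definition Phi g : R := \sum_(i < n) w (fib g i).

Lemma Phi_relabel g S j l : S \subset fib g j -> j != l ->
  Phi (relabel g S l) = Phi g - w (fib g j) - w (fib g l)
     + w (fib g j :\: S) + w (fib g l :|: S).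
Proof.
move=> sS jl; rewrite /Phi (bigD1 j) // (bigD1 l) 1?eq_sym //=.
rewrite [in RHS](bigD1 j) // [in RHS](bigD1 l) 1?eq_sym //=.
rewrite (fib_relabel _ _ sS) (negbTE jl) (fib_relabel _ _ sS) eqxx.
rewrite (eq_bigr (fun i => w (fib g i))); last first.
  by move=> i /andP[ij il]; rewrite (fib_relabel_other sS).
set s := \sum_(i < n | _) _; ring.
Qed.

End Fib.

Lemma pigeon n (j : 'I_n) (h s : 'I_n -> nat) N :
  (0 < N)%N -> (\sum_(i < n | i != j) s i <= N)%N -> (0 < \sum_(i < n | i != j) h i)%N ->
  exists l, [/\ l != j, (0 < h l)%N & ((\sum_(i < n | i != j) h i) * s l <= h l * N)%N].
Proof.
move=> N0 sN; set S := (\sum_(i < n | _) _)%N => S0.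
case: (boolP [exists l, [&& l != j, (0 < h l)%N & (S * s l <= h l * N)%N]]).
  by move=> /existsP[l /and3P[a b c]]; exists l.
move=> /existsPn H; exfalso.
have H1 : forall l, l != j -> (h l * N + (0 < h l) <= S * s l)%N.
  move=> l lj; have := H l; rewrite lj /=.
  case: (posnP (h l)) => [->|hp] /=; first by rewrite mul0n.
  by rewrite -ltnNge addn1.
have H2 : (\sum_(i < n | i != j) (h i * N + (0 < h i)) <= \sum_(i < n | i != j) S * s i)%N.
  by apply: leq_sum.
rewrite big_split /= -big_distrl /= -/S -big_distrr /= in H2.
have H3 : (0 < \sum_(i < n | i != j) ((0 < h i)%N : nat))%N.
  rewrite lt0n; apply/negP => /eqP/eqP; rewrite sum_nat_eq0 => /forallP H4.
  move: S0; rewrite lt0n /S; apply/negP/negPn; rewrite sum_nat_eq0.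
  apply/forallP => i; apply/implyP => ij; have := H4 i; rewrite ij /=.
  by case: (h i).
have H5 : (S * \sum_(i < n | i != j) s i <= S * N)%N by rewrite leq_mul2l sN orbT.
clearbody S; move: H2 H3 H5; set A1 := (S * N)%N; set A2 := (S * _)%N; set A3 := (\sum_(i < n | i != j) _)%N; lia.
Qed.

Lemma card_disjU (T : finType) (A B : {set T}) :
  [disjoint A & B] -> #|A :|: B| = (#|A| + #|B|)%N.
Proof.
move=> d; have := cardsUI A B; move: d; rewrite -setI_eq0 => /eqP ->.
by rewrite cards0 addn0.
Qed.

Lemma split_set (T : finType) (A P : {set T}) : A \subset P ->
  P = A :|: (P :\: A) /\ [disjoint A & P :\: A].
Proof.
move=> sAP; split.
  apply/setP => x; rewrite !inE; case Ax: (x \in A) => //=.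
  by rewrite (subsetP sAP).
by rewrite -setI_eq0; apply/eqP/setP => x; rewrite !inE; case: (x \in A).
Qed.

Lemma setD_split (T : finType) (A P Y : {set T}) : A \subset P -> P \subset Y ->
  Y :\: A = (P :\: A) :|: (Y :\: P) /\ [disjoint P :\: A & Y :\: P].
Proof.
move=> sAP sPY; split.
  apply/setP => x; rewrite !inE.
  case Ax: (x \in A); first by rewrite (subsetP sAP x Ax).
  by case Px: (x \in P); rewrite //= (subsetP sPY x Px).
by rewrite -setI_eq0; apply/eqP/setP => x; rewrite !inE; case: (x \in P); rewrite ?andbF.
Qed.

Lemma setD_split2 (T : finType) (A P Y : {set T}) : A \subset P -> P \subset Y ->
  Y :\: (P :\: A) = A :|: (Y :\: P) /\ [disjoint A & Y :\: P].
Proof.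
move=> sAP sPY; split.
  apply/setP => x; rewrite !inE.
  case Ax: (x \in A); first by rewrite /= (subsetP sPY x (subsetP sAP x Ax)).
  by case Px: (x \in P).
rewrite -setI_eq0; apply/eqP/setP => x; rewrite !inE.
by case Ax: (x \in A); rewrite //= (subsetP sAP x Ax).
Qed.

Lemma nat_aux1 a b : (0 < a)%N -> (2 * a <= a + b)%N -> (0 < b)%N /\ (a <= b)%N.
Proof. lia. Qed.

Lemma nat_aux2 a b N : (2 * a <= b)%N -> (b <= N)%N -> (2 * a <= N)%N.
Proof. lia. Qed.

Lemma nat_aux3 y N n : (n <= y)%N -> (y <= N)%N -> n = N.+1 -> False.
Proof. lia. Qed.

Section Main.
Local Open Scope ring_scope.
Variable R : realType.
Variables (eps alpha : R).
Hypotheses (eps0 : 0 < eps) (alpha_half : alpha < 1/2).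
Variables (T : finType) (e : rel T) (F : {set T}).
Hypotheses (hsimple : simple_graph e) (hmax : maximal_folner e eps F)
  (hsmall : small alpha F).

Definition beta := 1/2 - alpha.
Definition delta := beta * beta * eps / 4.
Definition mu := beta * beta * eps.
Let N := #|T|.
Let c : R := beta * N%:R.
Let Y := ~: F.
Let esym : symmetric e := hsimple.1.

Lemma F0 : F != set0.
Proof. by case: hmax => -[]. Qed.

Lemma cardF_pos : (0 < #|F|)%N.
Proof. by rewrite card_gt0 F0. Qed.

Lemma alpha_pos : 0 < alpha.
Proof.
have h1 : 1 <= #|F|%:R :> R by rewrite ler1n cardF_pos.
have h2 : 0 <= N%:R :> R by [].
move: hsmall; rewrite /small => h3.
rewrite ltNge; apply/negP => ha.
have : alpha * N%:R <= 0 by rewrite mulr_le0_ge0.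
lra.
Qed.

Lemma beta_pos : 0 < beta.
Proof. by rewrite /beta subr_gt0. Qed.

Lemma beta_lt : beta < 1/2.
Proof. have := alpha_pos; rewrite /beta; lra. Qed.

Lemma N_pos : (0 < N)%N.
Proof.
apply: (leq_trans cardF_pos); exact: max_card.
Qed.

Lemma cardY : #|Y|%:R = N%:R - #|F|%:R :> R.
Proof. rewrite /Y /N -(cardsC F) natrD; ring. Qed.

Lemma maxi (A : {set T}) : A \subset Y -> A != set0 -> #|A|%:R < c ->
  eps * #|A|%:R < (E e A (Y :\: A))%:R.
Proof.
move=> sAY A0 Ac.
have dFA : [disjoint F & A].
  rewrite -setI_eq0; apply/eqP/setP => x; rewrite !inE.
  apply/negP => /andP[xF /(subsetP sAY)]; by rewrite inE xF.
have cFA := card_disjU dFA.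
have hN : (2 * #|F :|: A| <= #|T|)%N.
  have : (2 * #|F :|: A|)%:R < N%:R :> R.
    rewrite cFA natrM natrD.
    move: hsmall Ac; rewrite /small /c /beta => h1 h2. lra.
  by rewrite ltr_nat => /ltnW.
rewrite ltNge; apply/negP => hle.
case: hmax => [[_ _ _ hF] hB].
apply: (hB (F :|: A)).
  apply: properUl; apply/negP => sAF.
  case/set0Pn: A0 => a aA; have := subsetP sAF a aA; have := subsetP sAY a aA.
  by rewrite inE => /negbTE ->.
split.
- by rewrite -card_gt0 cFA addn_gt0 cardF_pos.
- exact: subsetT.
- by rewrite cardsT.
- rewrite card_boundary.
  rewrite E_Ul //.
  have e1 : (E e F ([set: T] :\: (F :|: A)) <= E e F ([set: T] :\: F))%N.
    apply: (E_monor esym); apply/subsetP => x; by rewrite !inE; case: (x \in F); case: (x \in A).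
  have e2 : (E e A ([set: T] :\: (F :|: A)) <= E e A (Y :\: A))%N.
    by apply: (E_monor esym); apply/subsetP => x; rewrite !inE; case: (x \in F); case: (x \in A).
  move: hF; rewrite card_boundary => hF.
  have e1' : (E e F ([set: T] :\: (F :|: A)))%:R <= (E e F ([set: T] :\: F))%:R :> R by rewrite ler_nat.
  have e2' : (E e A ([set: T] :\: (F :|: A)))%:R <= (E e A (Y :\: A))%:R :> R by rewrite ler_nat.
  rewrite cFA !natrD mulrDr; lra.
Qed.


Let n := N.+1.
Let lam : R := mu * N%:R.
Definition wt (B : {set T}) : R := if B == set0 then 0 else (E e B B)%:R + lam.
Let Ph (g : {ffun T -> 'I_n}) := Phi Y wt g.
Definition valid (g : {ffun T -> 'I_n}) : bool :=
  [forall i, (fib Y g i != set0) ==> (c <= #|fib Y g i|%:R)].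

Lemma sum_fib (g : {ffun T -> 'I_n}) : (\sum_(i < n) #|fib Y g i| = #|Y|)%N.
Proof.
rewrite -sum1_card (partition_big (fun x => g x) xpredT) //=.
apply: eq_bigr => i _; rewrite -sum1_card; apply: eq_bigl => x.
by rewrite inE.
Qed.

Lemma cardY_le : (#|Y| <= N)%N.
Proof. exact: max_card. Qed.

Lemma sum_fib_rest (g : {ffun T -> 'I_n}) j :
  (\sum_(i < n | i != j) #|fib Y g i| <= N)%N.
Proof.
apply: leq_trans cardY_le; rewrite -(sum_fib g) [X in (_ <= X)%N](bigD1 j) //=.
exact: leq_addl.
Qed.

Lemma E_rest (g : {ffun T -> 'I_n}) j U :
  E e U (Y :\: fib Y g j) = (\sum_(i < n | i != j) E e U (fib Y g i))%N.
Proof.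
rewrite /E [RHS]exchange_big /=; apply: eq_bigr => x _.
rewrite (partition_big (fun y => g y) (fun i => i != j)) /=; last first.
  by move=> y; rewrite !inE => /andP[]; rewrite negb_and => /orP[] // /negPf ->.
apply: eq_bigr => i ij; apply: eq_bigl => y; rewrite !inE.
case: (g y =P i) => [->|]; rewrite ?andbF ?andbT //.
by rewrite (negbTE ij) andbF; case: (y \in F).
Qed.

Lemma valid_relabel (g : {ffun T -> 'I_n}) (S : {set T}) j l : valid g ->
  S \subset fib Y g j -> j != l ->
  (fib Y g j :\: S != set0 -> c <= #|fib Y g j :\: S|%:R) ->
  c <= #|fib Y g l :|: S|%:R -> valid (relabel g S l).
Proof.
move=> vg sS jl h1 h2; apply/forallP => i; apply/implyP.
case: (i =P l) => [->|/eqP il]; first by rewrite (fib_relabel l l sS) eqxx.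
case: (i =P j) => [->|/eqP ij].
  by rewrite (fib_relabel l j sS) (negbTE jl).
rewrite (fib_relabel_other sS ij il); move: vg => /forallP /(_ i) /implyP; exact.
Qed.


Lemma mu_pos : 0 < mu.
Proof. by rewrite /mu !mulr_gt0 // beta_pos. Qed.

Lemma delta_pos : 0 < delta.
Proof. by rewrite /delta -/mu divr_gt0 // mu_pos. Qed.

Lemma key1 : delta < beta * (eps - delta).
Proof.
have b0 := beta_pos; have b1 := beta_lt.
rewrite /delta.
have h : 0 < beta * eps by rewrite mulr_gt0.
have h2 : beta * beta < 1 / 4 by nra.
nra.
Qed.

Lemma key2 : mu <= 2 * beta * beta * (eps - delta).
Proof.
have b0 := beta_pos; have b1 := beta_lt.
rewrite /mu /delta.
have h : 0 < beta * beta * eps by rewrite !mulr_gt0.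
have h2 : beta * beta < 1 / 4 by nra.
nra.
Qed.

Lemma delta_lt_eps : delta < eps.
Proof. have := key1; have := beta_lt; have := beta_pos; have := delta_pos; nra. Qed.

Lemma c_pos : 0 < c.
Proof. by rewrite /c mulr_gt0 ?beta_pos // ltr0n N_pos. Qed.

Lemma wt_ne B : B != set0 -> wt B = (E e B B)%:R + lam.
Proof. by rewrite /wt => /negbTE ->. Qed.

Lemma wt0 : wt set0 = 0.
Proof. by rewrite /wt eqxx. Qed.

Lemma pigeonR (g : {ffun T -> 'I_n}) j (U : {set T}) :
  valid g -> (0 < E e U (Y :\: fib Y g j))%N ->
  exists l, [/\ l != j, fib Y g l != set0 &
     beta * (E e U (Y :\: fib Y g j))%:R <= (E e U (fib Y g l))%:R].
Proof.
move=> vg; rewrite E_rest => S0.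
have [l [lj hl hS]] := pigeon (h := fun i => E e U (fib Y g i))
   (s := fun i => #|fib Y g i|) N_pos (sum_fib_rest g j) S0.
have Qne : fib Y g l != set0.
  by apply/negP => /eqP Q0; move: hl; rewrite Q0 E_set0r.
exists l; split => //.
have cQ : c <= #|fib Y g l|%:R by move: vg => /forallP /(_ l) /implyP; apply.
set S := (\sum_(i < n | i != j) _)%N in hS *.
set h := E e U (fib Y g l) in hS *.
have Npos : 0 < N%:R :> R by rewrite ltr0n N_pos.
have h1 : S%:R * c <= S%:R * #|fib Y g l|%:R :> R by rewrite ler_wpM2l.
have h2 : S%:R * #|fib Y g l|%:R <= h%:R * N%:R :> R by rewrite -!natrM ler_nat.
have h3 : (beta * S%:R) * N%:R <= h%:R * N%:R.
  by apply: le_trans h2; apply: le_trans h1; rewrite /c le_eqVlt; apply/orP; left; apply/eqP; ring.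
by rewrite ler_pM2r in h3.
Qed.

Lemma improve (g : {ffun T -> 'I_n}) j (A : {set T}) : valid g ->
  fib Y g j != set0 -> folner e (fib Y g j) delta A ->
  exists g' : {ffun T -> 'I_n}, valid g' /\ Ph g < Ph g'.
Proof.
move=> vg Pne [A0 sAP hAP hb].
have PY : fib Y g j \subset Y by apply: fib_sub.
have AY : A \subset Y := subset_trans sAP PY.
have [eP dA] := split_set sAP.
have cP : #|fib Y g j| = (#|A| + #|fib Y g j :\: A|)%N by rewrite {1}eP card_disjU.
have hEA : (E e A (fib Y g j :\: A))%:R <= delta * #|A|%:R by rewrite -card_boundary.
have A1 : (0 < #|A|)%N by rewrite card_gt0.
have A1R : 0 < #|A|%:R :> R by rewrite ltr0n.
have cPc : c <= #|fib Y g j|%:R by move: vg => /forallP /(_ j) /implyP; apply.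
have PN : (#|fib Y g j| <= N)%N := max_card _.
have Npos : 0 < N%:R :> R by rewrite ltr0n N_pos.
have EPP : E e (fib Y g j) (fib Y g j) = (E e A A + E e (fib Y g j :\: A) (fib Y g j :\: A)
    + 2 * E e A (fib Y g j :\: A))%N by rewrite [in LHS]eP E_sq.
have hAP' : (2 * #|A| <= #|A| + #|fib Y g j :\: A|)%N by rewrite -cP.
have [PA1 APA] := nat_aux1 A1 hAP'.
have PA0 : fib Y g j :\: A != set0 by rewrite -card_gt0.
have dpos := delta_pos.
have AA : (2 * #|A| <= N)%N := nat_aux2 hAP PN.
have AAR : delta * (2 * #|A|)%:R <= delta * N%:R.
  by apply: ler_wpM2l; [exact: ltW | rewrite ler_nat].
rewrite natrM mulrCA in AAR.
have [cA|Ac] := leP c (#|A|%:R).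
  have [l /eqP l0] : exists l, fib Y g l == set0.
    case: (pickP (fun l => fib Y g l == set0)) => [l hl|hne]; first by exists l.
    exfalso.
    have : (\sum_(i < n) 1 <= \sum_(i < n) #|fib Y g i|)%N.
      by apply: leq_sum => i _; rewrite card_gt0 hne.
    rewrite sum_fib big_const_ord iter_addn_0 mul1n.
    move=> h; exact: (nat_aux3 h cardY_le erefl).
  have jl : j != l by apply/eqP => jl; move: Pne; rewrite jl l0 eqxx.
  exists (relabel g A l); split.
    apply: (valid_relabel vg sAP jl).
      by move=> _; apply: (le_trans cA); rewrite ler_nat.
    by rewrite l0 set0U.
  rewrite /Ph (Phi_relabel wt sAP jl) l0 set0U wt0 (wt_ne Pne) (wt_ne PA0) (wt_ne A0).
  rewrite EPP !natrD.
  have : 0 < lam by rewrite /lam mulr_gt0 // mu_pos.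
  have : delta * N%:R = lam / 4 by rewrite /lam /delta /mu; field.
  lra.
have hm := maxi AY A0 Ac.
have [eYA dYA] := setD_split sAP PY.
rewrite eYA E_Ur // in hm.
set SA := E e A (Y :\: fib Y g j) in hm.
have SApos : (eps - delta) * #|A|%:R < SA%:R.
  by rewrite mulrBl; move: hm; rewrite natrD; lra.
have edpos : 0 < eps - delta by have := delta_lt_eps; lra.
have [cPA|PAc] := leP c (#|fib Y g j :\: A|%:R).
  have S0 : (0 < E e A (Y :\: fib Y g j))%N.
    by rewrite -(ltr0n R) -/SA; apply: lt_trans SApos; rewrite mulr_gt0.
  have [l [lj Qne hQ]] := pigeonR vg S0.
  rewrite -/SA in hQ.
  have jl : j != l by rewrite eq_sym.
  have cQ : c <= #|fib Y g l|%:R by move: vg => /forallP /(_ l) /implyP; apply.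
  have dQA : [disjoint fib Y g l & A].
    by rewrite disjoint_sym; apply: disjointWl sAP _; apply: fib_disj.
  exists (relabel g A l); split.
    apply: (valid_relabel vg sAP jl); first by move=> _.
    by apply: (le_trans cQ); rewrite ler_nat subset_leq_card // subsetUl.
  have QA0 : fib Y g l :|: A != set0 by rewrite setU_eq0 negb_and A0 orbT.
  rewrite /Ph (Phi_relabel wt sAP jl) (wt_ne Pne) (wt_ne PA0) (wt_ne Qne) (wt_ne QA0).
  rewrite EPP (E_sq esym dQA) (E_sym esym (fib Y g l) A) !natrD ?natrM.
  have t1 : beta * ((eps - delta) * #|A|%:R) < beta * SA%:R by rewrite ltr_pM2l // beta_pos.
  have t2 : delta * #|A|%:R < beta * ((eps - delta) * #|A|%:R).
    by rewrite mulrA ltr_pM2r // key1.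
  lra.
have PAY : fib Y g j :\: A \subset Y by apply: subset_trans PY; apply: subsetDl.
have hm2 := maxi PAY PA0 PAc.
have [eY2 dY2] := setD_split2 sAP PY.
rewrite eY2 E_Ur // (E_sym esym _ A) in hm2.
set SB := E e (fib Y g j :\: A) (Y :\: fib Y g j) in hm2.
have eSP : E e (fib Y g j) (Y :\: fib Y g j) = (SA + SB)%N by rewrite {1}eP E_Ul.
set SP := E e (fib Y g j) (Y :\: fib Y g j) in eSP.
have SPpos : (eps - delta) * #|fib Y g j|%:R < SP%:R.
  rewrite eSP natrD mulrBl cP natrD !mulrDr.
  have : delta * #|A|%:R <= delta * #|fib Y g j :\: A|%:R.
    by apply: ler_wpM2l; [exact: ltW | rewrite ler_nat].
  move: hm hm2; rewrite !natrD; lra.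
have S0 : (0 < SP)%N.
  by rewrite -(ltr0n R); apply: lt_trans SPpos; rewrite mulr_gt0 // (lt_le_trans c_pos).
have [l [lj Qne hQ]] := pigeonR vg S0.
rewrite -/SP in hQ.
have jl : j != l by rewrite eq_sym.
have cQ : c <= #|fib Y g l|%:R by move: vg => /forallP /(_ l) /implyP; apply.
have dQP : [disjoint fib Y g l & fib Y g j] by apply: fib_disj.
exists (relabel g (fib Y g j) l); split.
  apply: (valid_relabel vg (subxx _) jl); first by rewrite setDv eqxx.
  by apply: (le_trans cQ); rewrite ler_nat subset_leq_card // subsetUl.
have QP0 : fib Y g l :|: fib Y g j != set0 by rewrite setU_eq0 negb_and Pne orbT.
rewrite /Ph (Phi_relabel wt (subxx _) jl) setDv wt0 (wt_ne Pne) (wt_ne Qne) (wt_ne QP0).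
rewrite (E_sq esym dQP) (E_sym esym (fib Y g l)) !natrD ?natrM.
have u1 : beta * ((eps - delta) * #|fib Y g j|%:R) < beta * SP%:R.
  by rewrite ltr_pM2l // beta_pos.
have u2 : beta * ((eps - delta) * c) <= beta * ((eps - delta) * #|fib Y g j|%:R).
  apply: ler_wpM2l; [exact: ltW beta_pos | apply: ler_wpM2l; [exact: ltW edpos | exact: cPc]].
have u4 : lam <= 2 * (beta * ((eps - delta) * c)).
  have -> : 2 * (beta * ((eps - delta) * c)) = (2 * beta * beta * (eps - delta)) * N%:R.
    by rewrite /c; ring.
  rewrite /lam; apply: ler_wpM2r; [exact: ltW Npos | exact: key2].
have : 0 <= (E e (fib Y g l) (fib Y g l))%:R :> R by [].
lra.
Qed.

Lemma valid0 : valid [ffun _ => (ord0 : 'I_n)].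
Proof.
apply/forallP => i; apply/implyP => /set0Pn [x]; rewrite inE ffunE => /andP[_ /eqP i0].
have -> : fib Y [ffun _ => (ord0 : 'I_n)] i = Y.
  by apply/setP => y; rewrite inE ffunE -i0 eqxx andbT.
rewrite cardY /c /beta.
move: hsmall; rewrite /small => h.
have : 0 <= N%:R :> R by [].
lra.
Qed.

Lemma final : exists (k : nat) (Yk : 'I_k -> {set T}),
        [/\ F :|: (\bigcup_(i < k) Yk i) = [set: T],
            forall i, [disjoint F & Yk i],
            forall i j, i != j -> [disjoint Yk i & Yk j],
            forall i, expander e (Yk i) delta &
            forall i, big (1 / 2 - alpha) (Yk i)].
Proof.
have [g vg gmax] : exists2 g, valid g & forall g', valid g' -> Ph g' <= Ph g.
  by case: (arg_maxP Ph valid0) => g vg h; exists g.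
pose D := [set i | fib Y g i != set0].
exists #|D|, (fun i => fib Y g (enum_val i)).
have neD : forall i : 'I_#|D|, fib Y g (enum_val i) != set0.
  by move=> i; have := enum_valP i; rewrite inE.
split.
- apply/setP => x; rewrite !inE; case xF: (x \in F) => //=.
  have gD : g x \in D.
    by rewrite inE; apply/set0Pn; exists x; rewrite !inE xF eqxx.
  apply/bigcupP; exists (enum_rank_in gD (g x)) => //.
  by rewrite enum_rankK_in // !inE xF eqxx.
- move=> i; rewrite disjoint_sym disjoints_subset; apply: fib_sub.
- move=> i j ij; apply: fib_disj; apply: contra ij => /eqP /enum_val_inj ->.
  by rewrite eqxx.
- move=> i A hA.
  have [g' [vg' lt]] := improve vg (neD i) hA.
  by have := gmax g' vg'; rewrite leNgt lt.
- move=> i; rewrite /big.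
  by move: vg => /forallP /(_ (enum_val i)) /implyP /(_ (neD i)).
Qed.

End Main.

Unset Implicit Arguments.
Local Open Scope ring_scope.

Theorem theorem2p2 (R : realType) (eps alpha : R) :
  0 < eps -> alpha < 1 / 2 ->
  exists2 delta : R, 0 < delta &
    forall (T : finType) (e : rel T) (F : {set T}),
      simple_graph e ->
      maximal_folner e eps F ->
      small alpha F ->
      exists (k : nat) (Y : 'I_k -> {set T}),
        [/\ F :|: (\bigcup_(i < k) Y i) = [set: T],
            forall i, [disjoint F & Y i],
            forall i j, i != j -> [disjoint Y i & Y j],
            forall i, expander e (Y i) delta &
            forall i, big (1 / 2 - alpha) (Y i)].
Proof.
move=> eps0 ah; exists (delta eps alpha).
  rewrite /delta divr_gt0 // !mulr_gt0 //; by rewrite /beta subr_gt0.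
move=> T e F hs hm hsm; exact: final.
Qed.
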